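(* Let $A$ be a binary matrix that has an optimal binary decomposition $A=U\cdot V$ such that every row of $V$ is a row of $A$. If, in addition, $A$ has the Unique base rows sums property, then the set of columns of $U$ spans (in the binary sense) every binary base of $A$, and consequently $A$ has the Augmentation property for the binary rank.
   Context: For a binary $n\times m$ matrix $A$, the binary rank $R_{binary}(A)$ is the least $k$ with $A=UV$, $U\in\{0,1\}^{n\times k}$, $V\in\{0,1\}^{k\times m}$, ordinary arithmetic; such a decomposition with $k=R_{binary}(A)$ is an optimal binary decomposition. A set $X$ of $\{0,1\}$-vectors spans a vector $y$ (binary sense) if $y=\sum_{x\in X}c_x x$ with $c_x\in\{0,1\}$ and ordinary addition; it spans a set $Y$ if it spans each vector of $Y$. A binary base of $A$ is a set of $\{0,1\}$ column vectors spanning all columns of $A$ of minimum cardinality among such spanning sets. $A$ has the Unique base rows sums property if for every optimal binary decomposition $A=X\cdot Y$, there are no two disjoint nonempty sets of row indices $\{i_1,\dots,i_s\}$, $\{j_1,\dots,j_t\}$ of $Y$ with $y_{i_1}+\dots+y_{i_s}=y_{j_1}+\dots+y_{j_t}$ (ordinary addition). $A$ has the Augmentation property for the binary rank if for all binary column vectors $x_1,\dots,x_t$ with $R_{binary}(A|x_i)=R_{binary}(A)$ for all $i$, also $R_{binary}(A|x_1,\dots,x_t)=R_{binary}(A)$, where $(A|x_1,\dots,x_t)$ is $A$ with these columns appended. *)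

(* Defs.v *)
(* Binary matrices are 'M[bool]_(n,m); products and sums of
   {0,1}-entries are computed in nat (ordinary arithmetic), via nat_of_bool. *)
From mathcomp Require Import all_boot all_order all_algebra.
Set Implicit Arguments. Unset Strict Implicit. Unset Printing Implicit Defensive.

Definition bmul (n k m : nat) (U : 'M[bool]_(n, k)) (V : 'M[bool]_(k, m))
  : 'M[nat]_(n, m) :=
  (\matrix_(i, j) (\sum_(l < k) (U i l : nat) * (V l j : nat))%N)%R.

Definition bdecomp (n m k : nat) (A : 'M[bool]_(n, m))
  (U : 'M[bool]_(n, k)) (V : 'M[bool]_(k, m)) : bool :=
  map_mx nat_of_bool A == bmul U V.

Definition has_bdecomp (n m : nat) (A : 'M[bool]_(n, m)) (k : nat) : bool :=
  [exists U : 'M[bool]_(n, k), exists V : 'M[bool]_(k, m), bdecomp A U V].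

Lemma has_bdecomp_ex (n m : nat) (A : 'M[bool]_(n, m)) :
  exists k, has_bdecomp A k.
Proof.
exists m; apply/existsP; exists A; apply/existsP.
exists (\matrix_(i, j) (i == j))%R; apply/eqP/matrixP => i j.
rewrite !mxE (bigD1 j) //= mxE eqxx muln1 big1 ?addn0 // => l /negbTE nlj.
by rewrite mxE nlj muln0.
Qed.

Definition brank (n m : nat) (A : 'M[bool]_(n, m)) : nat :=
  ex_minn (has_bdecomp_ex A).

Definition bspans_vec (n : nat) (X : {set 'cV[bool]_n}) (y : 'cV[bool]_n) : Prop :=
  exists c : 'cV[bool]_n -> bool,
    forall i, (y i ord0 : nat) = (\sum_(x in X) (c x : nat) * (x i ord0 : nat))%N.

Definition bspans (n : nat) (X Y : {set 'cV[bool]_n}) : Prop :=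
  forall y, y \in Y -> bspans_vec X y.

Definition cols (n m : nat) (A : 'M[bool]_(n, m)) : {set 'cV[bool]_n} :=
  [set col j A | j : 'I_m].

Definition binary_base (n m : nat) (A : 'M[bool]_(n, m)) (B : {set 'cV[bool]_n}) : Prop :=
  bspans B (cols A) /\
  forall B' : {set 'cV[bool]_n}, bspans B' (cols A) -> (#|B| <= #|B'|)%N.

Definition unique_base_rows_sums (n m : nat) (A : 'M[bool]_(n, m)) : Prop :=
  forall (X : 'M[bool]_(n, brank A)) (Y : 'M[bool]_(brank A, m)),
    bdecomp A X Y ->
    forall I J : {set 'I_(brank A)},
      I != set0 -> J != set0 -> [disjoint I & J] ->
      ~ (forall j : 'I_m,
           (\sum_(i in I) (Y i j : nat))%N = (\sum_(i in J) (Y i j : nat))%N).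

Definition augment (n m t : nat) (A : 'M[bool]_(n, m)) (xs : 'I_t -> 'cV[bool]_n)
  : 'M[bool]_(n, m + t) :=
  row_mx A (\matrix_(r, i) xs i r ord0)%R.

Definition augmentation_property (n m : nat) (A : 'M[bool]_(n, m)) : Prop :=
  forall (t : nat) (xs : 'I_t -> 'cV[bool]_n),
    (forall i : 'I_t, brank (augment A (fun _ : 'I_1 => xs i)) = brank A) ->
    brank (augment A xs) = brank A.

(* Main.v *)
Require Import Defs.
From mathcomp Require Import all_boot all_order all_algebra.
From mathcomp Require Import zify.
Set Implicit Arguments. Unset Strict Implicit. Unset Printing Implicit Defensive.

Lemma bdecompP n m k (A : 'M[bool]_(n, m)) (X : 'M[bool]_(n, k)) Y :
  bdecomp A X Y <-> forall i j, (A i j : nat) = (\sum_l (X i l : nat) * (Y l j : nat))%N.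
Proof.
rewrite /bdecomp; split => [/eqP H i j | H].
  by have := congr1 (fun M : 'M[nat]_(n, m) => M i j) H; rewrite !mxE.
by apply/eqP/matrixP => i j; rewrite !mxE; exact: H.
Qed.

Lemma bdE n m k (A : 'M[bool]_(n, m)) (X : 'M[bool]_(n, k)) Y :
  bdecomp A X Y -> forall i j, (A i j : nat) = (\sum_l (X i l : nat) * (Y l j : nat))%N.
Proof. by move/bdecompP. Qed.

Lemma brank_min n m (A : 'M[bool]_(n, m)) k : has_bdecomp A k -> brank A <= k.
Proof. by rewrite /brank; case: ex_minnP => r _ H; apply: H. Qed.

Lemma brank_dec n m (A : 'M[bool]_(n, m)) : has_bdecomp A (brank A).
Proof. by rewrite /brank; case: ex_minnP. Qed.

Lemma zero_row n m k (A : 'M[bool]_(n, m)) (X : 'M[bool]_(n, k)) Y (l : 'I_k) :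
  bdecomp A X Y -> (forall j, Y l j = false) -> has_bdecomp A k.-1.
Proof.
case: k X Y l => [|k] X Y l; first by case: l.
move=> /bdecompP H Hz; apply/existsP; exists (col' l X); apply/existsP.
exists (row' l Y); apply/bdecompP => i j.
rewrite H (bigD1_ord l) //= Hz muln0 add0n; apply: eq_bigr => a _; by rewrite !mxE.
Qed.

Lemma opt_row_nz n m (A : 'M[bool]_(n, m)) (X : 'M[bool]_(n, brank A)) Y l :
  bdecomp A X Y -> exists j, Y l j.
Proof.
move=> H; case: (boolP [exists j, Y l j]) => [/existsP//|/existsPn Hn].
exfalso; have := brank_min (zero_row H (fun j => negbTE (Hn j))).
have := ltn_ord l; lia.
Qed.

Lemma opt_col_nz n m (A : 'M[bool]_(n, m)) (X : 'M[bool]_(n, brank A)) Y l :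
  bdecomp A X Y -> exists i, X i l.
Proof.
move=> H; case: (boolP [exists i, X i l]) => [/existsP//|/existsPn Hn].
exfalso.
pose Y' := (\matrix_(a, j) ((a != l) && Y a j))%R.
have H' : bdecomp A X Y'.
  apply/bdecompP => i j; rewrite (bdE H); apply: eq_bigr => a _.
  rewrite mxE; case: (eqVneq a l) => [->|//]; by rewrite (negbTE (Hn i)).
have [j] := opt_row_nz l H'; by rewrite mxE eqxx.
Qed.

Lemma opt_col_inj n m (A : 'M[bool]_(n, m)) (X : 'M[bool]_(n, brank A)) Y :
  bdecomp A X Y -> injective (fun l => col l X).
Proof.
move=> H l l' /= E; apply/eqP; apply/negPn/negP => nll.
have Ex i : X i l' = X i l by have := congr1 (fun M : 'cV[bool]_n => M i ord0) E; rewrite !mxE.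
have [i0 Xi0] := opt_col_nz l H.
have disj j : ~~ (Y l j && Y l' j).
  apply/negP => /andP[Y1 Y2].
  have := leq_b1 (A i0 j); rewrite -ltnS -[(A i0 j : nat).+1]/(1 + A i0 j : nat).
  rewrite (bdE H) (bigD1 l) //= (bigD1 l') /=; last by rewrite eq_sym.
  rewrite Xi0 Y1 Ex Xi0 Y2 /=; lia.
pose Y' := (\matrix_(a, j) if a == l then Y l j || Y l' j else (a != l') && Y a j)%R.
have H' : bdecomp A X Y'.
  apply/bdecompP => i j; rewrite (bdE H).
  rewrite (bigD1 l) //= [in RHS](bigD1 l) //= (bigD1 l') /=; last by rewrite eq_sym.
  rewrite [in RHS](bigD1 l') /=; last by rewrite eq_sym.
  rewrite !addnA; congr (_ + _)%N.
    rewrite !mxE eqxx [l' == l]eq_sym (negbTE nll) eqxx Ex; move: (disj j).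
    by case: (X i l); case: (Y l j); case: (Y l' j).
  apply: eq_bigr => a /andP[al al']; by rewrite mxE (negbTE al) al'.
have [j] := opt_row_nz l' H'; rewrite mxE eqxx.
by rewrite eq_sym (negbTE nll).
Qed.

Lemma key n m (A : 'M[bool]_(n, m)) (U : 'M[bool]_(n, brank A)) V
  (r : 'I_(brank A) -> 'I_n) (X : 'M[bool]_(n, brank A)) Y :
  bdecomp A U V -> (forall l j, V l j = A (r l) j) -> unique_base_rows_sums A ->
  bdecomp A X Y ->
  forall i l', (X i l' : nat) = (\sum_l (U i l : nat) * (X (r l) l' : nat))%N.
Proof.
move=> HUV HV Hu HXY i.
pose w l' := (\sum_l (U i l : nat) * (X (r l) l' : nat))%N.
have Hw j : (\sum_l' w l' * (Y l' j : nat))%N = A i j.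
  rewrite /w; under eq_bigr do rewrite big_distrl /=.
  rewrite exchange_big /= (bdE HUV); apply: eq_bigr => l _.
  rewrite HV (bdE HXY) big_distrr /=; apply: eq_bigr => a _; by rewrite mulnA.
have Hw1 l' : w l' <= 1.
  have [j Yj] := opt_row_nz l' HXY.
  have : w l' * Y l' j <= A i j by rewrite -Hw (bigD1 l') //= leq_addr.
  by rewrite Yj muln1 => h; apply: leq_trans h (leq_b1 _).
pose I := [set a | (w a == 1) && ~~ X i a].
pose J := [set a | (w a == 0) && X i a].
have HIJ j : (\sum_(a in I) (Y a j : nat))%N = (\sum_(a in J) (Y a j : nat))%N.
  have E : (\sum_a w a * (Y a j : nat))%N = (\sum_a (X i a : nat) * (Y a j : nat))%N.
    by rewrite Hw (bdE HXY).
  have E1 : (\sum_a w a * (Y a j : nat))%N =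
     (\sum_(a in I) (Y a j : nat) + \sum_a ((w a == 1) && X i a : nat) * (Y a j : nat))%N.
    rewrite (big_mkcond (fun a => a \in _)) -big_split; apply: eq_bigr => a _; rewrite inE.
    move: (Hw1 a); case: (w a) => [|[|//]] _; by case: (X i a); case: (Y a j).
  have E2 : (\sum_a (X i a : nat) * (Y a j : nat))%N =
     (\sum_(a in J) (Y a j : nat) + \sum_a ((w a == 1) && X i a : nat) * (Y a j : nat))%N.
    rewrite (big_mkcond (fun a => a \in _)) -big_split; apply: eq_bigr => a _; rewrite inE.
    move: (Hw1 a); case: (w a) => [|[|//]] _; by case: (X i a); case: (Y a j).
  by rewrite E1 E2 in E; apply: (addIn E).
have zrow (K : {set 'I_(brank A)}) b : b \in K ->
    (forall j, \sum_(a in K) (Y a j : nat) = 0)%N -> False.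
  move=> bK HK; have [j Yj] := opt_row_nz b HXY.
  have := HK j; rewrite (bigD1 b) //= Yj.
  by [].
move=> l'.
case: (set_0Vmem I) => [I0|[a aI]]; case: (set_0Vmem J) => [J0|[b bJ]].
- have := Hw1 l'; move: I0 J0 => /setP/(_ l') + /setP/(_ l'); rewrite !inE -/(w l').
  by case: (w l') => [|[|//]]; case: (X i l').
- exfalso; apply: (zrow J b bJ) => j; by rewrite -HIJ I0 big_set0.
- exfalso; apply: (zrow I a aI) => j; by rewrite HIJ J0 big_set0.
- exfalso; apply: (Hu X Y HXY I J _ _ _ HIJ).
  + by apply/set0Pn; exists a.
  + by apply/set0Pn; exists b.
  + apply/pred0P => c /=; rewrite !inE; apply/negbTE/negP => /andP[/andP[/eqP-> _] /andP[]] //.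
Qed.

Lemma span_cols n k (U : 'M[bool]_(n, k)) (inj : injective (fun l => col l U))
  (d : 'I_k -> bool) (y : 'cV[bool]_n) :
  (forall i, (y i ord0 : nat) = (\sum_l (U i l : nat) * (d l : nat))%N) ->
  bspans_vec (cols U) y.
Proof.
move=> H; exists (fun x => [exists l, (col l U == x) && d l]) => i.
rewrite H /cols big_imset /=; last by move=> a b _ _; apply: inj.
apply: eq_bigr => l _; rewrite mxE mulnC; congr (_ * _)%N; congr nat_of_bool.
apply/idP/existsP => [dl|[l' /andP[/eqP/inj -> ->]]] //.
by exists l; rewrite eqxx.
Qed.

Lemma span_decomp n m (A : 'M[bool]_(n, m)) (B : {set 'cV[bool]_n}) k' :
  #|B| = k' -> bspans B (cols A) ->
  exists X : 'M[bool]_(n, k'), exists Y : 'M[bool]_(k', m),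
    bdecomp A X Y /\ forall b, b \in B -> exists l, col l X = b.
Proof.
move=> e; subst k' => HB.
have [cf Hcf] : exists cf : 'I_m -> 'cV[bool]_n -> bool, forall j i,
    (A i j : nat) = (\sum_(x in B) (cf j x : nat) * (x i ord0 : nat))%N.
  suff H : forall j, exists c : 'cV[bool]_n -> bool, forall i,
      (A i j : nat) = (\sum_(x in B) (c x : nat) * (x i ord0 : nat))%N.
    by have [cf Hcf] := fin_all_exists H; exists cf.
  move=> j; have [c Hc] : bspans_vec B (col j A) by apply: HB; apply/imsetP; exists j.
  by exists c => i; rewrite -Hc mxE.
exists (\matrix_(i, l) (enum_val l : 'cV[bool]_n) i ord0)%R,
  (\matrix_(l, j) cf j (enum_val l : 'cV[bool]_n))%R; split.
  apply/bdecompP => i j; rewrite Hcf big_enum_val; apply: eq_bigr => l _.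
  by rewrite !mxE mulnC.
move=> b bB; exists (enum_rank_in bB b); apply/matrixP => i j.
by rewrite !mxE enum_rankK_in // [j]ord1.
Qed.

Lemma aug_l n m t (A : 'M[bool]_(n, m)) (xs : 'I_t -> 'cV[bool]_n) k
  (X : 'M[bool]_(n, k)) Y :
  bdecomp (augment A xs) X Y -> bdecomp A X (\matrix_(l, j) Y l (lshift t j))%R.
Proof.
move=> H; apply/bdecompP => i j; have := bdE H i (lshift t j).
rewrite /augment row_mxEl => ->; apply: eq_bigr => l _; by rewrite mxE.
Qed.

Lemma aug_r n m t (A : 'M[bool]_(n, m)) (xs : 'I_t -> 'cV[bool]_n) k
  (X : 'M[bool]_(n, k)) Y :
  bdecomp (augment A xs) X Y -> forall s i,
  (xs s i ord0 : nat) = (\sum_l (X i l : nat) * (Y l (rshift m s) : nat))%N.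
Proof.
move=> H s i; have := bdE H i (rshift m s); by rewrite /augment row_mxEr mxE.
Qed.

Lemma aug_build n m t (A : 'M[bool]_(n, m)) (xs : 'I_t -> 'cV[bool]_n) k
  (X : 'M[bool]_(n, k)) Y (z : 'I_t -> 'I_k -> bool) :
  bdecomp A X Y ->
  (forall s i, (xs s i ord0 : nat) = (\sum_l (X i l : nat) * (z s l : nat))%N) ->
  bdecomp (augment A xs) X (row_mx Y (\matrix_(l, s) z s l))%R.
Proof.
move=> H Hz; apply/bdecompP => i j; rewrite -[j]splitK; case: (split j) => j' /=.
  rewrite /augment row_mxEl (bdE H); apply: eq_bigr => l _; by rewrite row_mxEl.
rewrite /augment row_mxEr mxE Hz; apply: eq_bigr => l _; by rewrite row_mxEr mxE.
Qed.

Theorem theorem2 (n m : nat) (A : 'M[bool]_(n, m))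
  (U : 'M[bool]_(n, brank A)) (V : 'M[bool]_(brank A, m)) :
  bdecomp A U V ->
  (forall l : 'I_(brank A), exists i : 'I_n, row l V = row i A) ->
  unique_base_rows_sums A ->
  (forall B : {set 'cV[bool]_n}, binary_base A B -> bspans (cols U) B) /\
  augmentation_property A.
Proof.
move=> HUV HV Hu.
have [r Hr] : exists r : 'I_(brank A) -> 'I_n, forall l j, V l j = A (r l) j.
  have [r Hr] := fin_all_exists HV; exists r => l j.
  by have := congr1 (fun M : 'rV[bool]_m => M ord0 j) (Hr l); rewrite !mxE.
have injU := opt_col_inj HUV.
have spanA : bspans (cols U) (cols A).
  move=> y /imsetP[j _ ->]; apply: (span_cols injU (d := fun l => V l j)) => i.
  by rewrite mxE (bdE HUV).
have Hkey := key HUV Hr Hu.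
split.
- move=> B [HB Hmin].
  have e : #|B| = brank A.
    apply/eqP; rewrite eqn_leq; apply/andP; split.
      apply: leq_trans (Hmin _ spanA) _; apply: leq_trans (leq_imset_card _ _) _.
      by rewrite card_ord.
    have [X [Y [HXY _]]] := span_decomp erefl HB.
    by apply: brank_min; apply/existsP; exists X; apply/existsP; exists Y.
  have [X [Y [HXY HXB]]] := span_decomp e HB.
  move=> b bB; have [l <-] := HXB b bB.
  apply: (span_cols injU (d := fun l' => X (r l') l)) => i; rewrite mxE.
  exact: Hkey HXY i l.
- move=> t xs Hx.
  apply/eqP; rewrite eqn_leq; apply/andP; split.
  + have [z Hz] : exists z : 'I_t -> 'I_(brank A) -> bool, forall s i,
        (xs s i ord0 : nat) = (\sum_l (U i l : nat) * (z s l : nat))%N.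
      suff H : forall s, exists zs : 'I_(brank A) -> bool, forall i,
          (xs s i ord0 : nat) = (\sum_l (U i l : nat) * (zs l : nat))%N.
        by have [z Hz] := fin_all_exists H; exists z.
      move=> s.
      have := brank_dec (augment A (fun _ : 'I_1 => xs s)).
      rewrite Hx => /existsP[X /existsP[Y HXY]].
      have HXA := aug_l HXY; have Hl := aug_r HXY ord0.
      pose w l' := (\sum_l (X (r l') l : nat) * (Y l (rshift m ord0) : nat))%N.
      have Ex i : (xs s i ord0 : nat) = (\sum_l' (U i l' : nat) * w l')%N.
        rewrite Hl; under eq_bigr do rewrite (Hkey _ _ HXA) big_distrl /=.
        rewrite exchange_big /=; apply: eq_bigr => l' _; rewrite /w big_distrr /=.
        apply: eq_bigr => l _; by rewrite mulnA.
      have Hw1 l' : w l' <= 1.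
        have [i0 Ui0] := opt_col_nz l' HUV.
        have := leq_b1 (xs s i0 ord0); rewrite Ex (bigD1 l') //= Ui0 mul1n => h.
        exact: leq_trans (leq_addr _ _) h.
      exists (fun l' => w l' != 0) => i; rewrite Ex; apply: eq_bigr => l' _.
      by move: (Hw1 l'); case: (w l') => [|[|]].
    apply: brank_min; apply/existsP; exists U; apply/existsP.
    exists (row_mx V (\matrix_(l, s) z s l))%R; exact: aug_build.
  + have /existsP[X /existsP[Y HXY]] := brank_dec (augment A xs).
    apply: brank_min; apply/existsP; exists X; apply/existsP; eexists.
    exact: aug_l HXY.
Qed.
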